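(* Let $\rho_{\rm up},\rho_{\rm low}\in[0,1]$. Suppose there is an element-based generator $\mathds{G}_{\rm vanilla}$ that, for any countable collection $\mathcal{L}$, generates from $\mathcal{L}$ in the limit with element-based upper (respectively lower) density $\rho_{\rm up}$ (respectively $\rho_{\rm low}$) under enumerations with no noise and no omissions. Then there exists an element-based generator $\mathds{G}_{\rm tolerant}$ that, for any countable collection $\mathcal{L}$, generates from $\mathcal{L}$ in the limit with element-based upper (respectively lower) density $\rho_{\rm up}$ (respectively $\rho_{\rm low}$) under enumerations with finite noise and finite omissions.
   Context: The universe is $U=\mathbb{N}$ with its natural order. A language is an infinite subset of $U$; a collection is a countable family of languages. For $A,B\subseteq\mathbb{N}$ with $B=\{b_1<b_2<\cdots\}$, $\mu_{\rm up}(A,B)=\limsup_n\frac1n|A\cap\{b_1,\dots,b_n\}|$ and $\mu_{\rm low}(A,B)=\liminf_n\frac1n|A\cap\{b_1,\dots,b_n\}|$. An enumeration of $K$ with no noise and no omissions lists every element of $K$ exactly once and nothing else; an enumeration of $K$ with finite noise and finite omissions is a sequence of distinct elements listing every element of some $\hat K\subseteq K$ with $|K\setminus\hat K|<\infty$ and only finitely many elements outside $\hat K$. An element-based generator outputs at step $n$, from $x_1,\dots,x_n$ and knowledge of $\mathcal{L}$ (not $K$), an element $w_n\notin\{x_1,\dots,x_n,w_1,\dots,w_{n-1}\}$. It generates in the limit if for every $K\in\mathcal{L}$ and admissible enumeration there is $n^\star$ with $w_n\in K$ for $n\ge n^\star$; with element-based upper (lower) density $\rho$ if additionally $\mu_{\rm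 up}(W,K)\ge\rho$ ($\mu_{\rm low}(W,K)\ge\rho$), where $W=\{w_1,w_2,\dots\}$. *)

(* Defs.v *)
From Stdlib Require Import Reals Lia List Classical ClassicalEpsilon.
From Coquelicot Require Import Coquelicot.
Import ListNotations.
Open Scope R_scope.

Definition lang := nat -> Prop.

(* A language is an infinite subset of N. *)
Definition infinite_set (K : lang) : Prop :=
  forall m : nat, exists k : nat, (m <= k)%nat /\ K k.

(* A countable collection, presented as an enumeration L 0, L 1, ...
   of languages (repetitions allowed). *)
Definition collection := nat -> lang.

Definition is_collection (L : collection) : Prop :=
  forall i, infinite_set (L i).

(* An element-based generator: from the collection L (but not K) and the
   prefix [x_1; ...; x_n] of the enumeration it outputs w_n. *)
Definition generator := collection -> list nat -> nat.

(* Outputs are fresh: w_n is not among x_1..x_n nor w_1..w_{n-1}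
   (w_k is the output on the length-k prefix). *)
Definition element_based (G : generator) : Prop :=
  forall (L : collection) (s : list nat),
    ~ In (G L s) s /\
    (forall k, (1 <= k < length s)%nat -> G L s <> G L (firstn k s)).

(* Prefix x_1..x_{n+1} of an enumeration x : nat -> nat (0-indexed). *)
Definition prefix (x : nat -> nat) (n : nat) : list nat :=
  map x (seq 0 (S n)).

(* The output sequence w_{n+1} (0-indexed as w n). *)
Definition outputs (G : generator) (L : collection) (x : nat -> nat) : nat -> nat :=
  fun n => G L (prefix x n).

Definition memb (A : lang) (k : nat) : bool :=
  if excluded_middle_informative (A k) then true else false.

Definition incr_enum (B : lang) (b : nat -> nat) : Prop :=
  (forall n, (b n < b (S n))%nat) /\ (forall k, B k <-> exists n, b n = k).

(* (1/n) |A ∩ {b_1,...,b_n}|, indexed so that entry n corresponds to n+1. *)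
Definition dens_ratio (A : lang) (b : nat -> nat) (n : nat) : R :=
  INR (length (filter (fun i => memb A (b i)) (seq 0 (S n)))) / INR (S n).

Definition mu_up_ge (A B : lang) (rho : R) : Prop :=
  forall b, incr_enum B b -> Rbar_le (Finite rho) (LimSup_seq (dens_ratio A b)).
Definition mu_low_ge (A B : lang) (rho : R) : Prop :=
  forall b, incr_enum B b -> Rbar_le (Finite rho) (LimInf_seq (dens_ratio A b)).

Definition exact_enum (K : lang) (x : nat -> nat) : Prop :=
  (forall n m, x n = x m -> n = m) /\
  (forall n, K (x n)) /\
  (forall k, K k -> exists n, x n = k).

(* Enumeration of K with finite noise and finite omissions. *)
Definition tolerant_enum (K : lang) (x : nat -> nat) : Prop :=
  (forall n m, x n = x m -> n = m) /\
  exists Khat : lang,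
    (forall k, Khat k -> K k) /\
    (exists M, forall k, K k -> ~ Khat k -> (k < M)%nat) /\
    (forall k, Khat k -> exists n, x n = k) /\
    (exists N, forall n, (N <= n)%nat -> Khat (x n)).

Inductive dens_kind := Upper | Lower.

Definition dens_ge (d : dens_kind) (A B : lang) (rho : R) : Prop :=
  match d with Upper => mu_up_ge A B rho | Lower => mu_low_ge A B rho end.

Definition generates_with_density (Enum : lang -> (nat -> nat) -> Prop)
    (d : dens_kind) (rho : R) (G : generator) : Prop :=
  forall L : collection, is_collection L ->
  forall (i : nat) (x : nat -> nat), Enum (L i) x ->
    (exists nstar, forall n, (nstar <= n)%nat -> L i (outputs G L x n)) /\
    dens_ge d (fun w => exists n, outputs G L x n = w) (L i) rho.

(* Main.v *)
Require Import Defs.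
From Stdlib Require Import Reals Lia Lra Psatz List Classical ClassicalEpsilon Arith ZArith Cantor FunctionalExtensionality.
From Coquelicot Require Import Coquelicot.
Import ListNotations.
Open Scope nat_scope.

Lemma least_ex (P : nat -> Prop) n : P n -> exists m, P m /\ forall k, P k -> (m <= k)%nat.
Proof.
  induction n as [n IH] using lt_wf_ind. intros Hn.
  destruct (classic (exists k, (k < n)%nat /\ P k)) as [[k [Hk HPk]]|Hno].
  - exact (IH k Hk HPk).
  - exists n. split; auto. intros k Hk. destruct (le_lt_dec n k); auto.
    exfalso; apply Hno; eauto.
Qed.

Lemma mono_lt (b : nat -> nat) : (forall n, (b n < b (S n))%nat) ->
  forall i j, (i < j)%nat -> (b i < b j)%nat.
Proof.
  intros Hb i j Hij. induction Hij. apply Hb. specialize (Hb m). lia.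
Qed.

Lemma mono_le (b : nat -> nat) : (forall n, (b n < b (S n))%nat) ->
  forall i j, (i <= j)%nat -> (b i <= b j)%nat.
Proof.
  intros Hb i j Hij. destruct (Nat.eq_dec i j). subst; lia.
  assert (i < j)%nat by lia. pose proof (mono_lt b Hb i j H). lia.
Qed.

Lemma mono_rev (b : nat -> nat) : (forall n, (b n < b (S n))%nat) ->
  forall i j, (b i <= b j)%nat -> (i <= j)%nat.
Proof.
  intros Hb i j H. destruct (le_lt_dec i j); auto.
  pose proof (mono_lt b Hb j i l). lia.
Qed.

Lemma mono_ge (b : nat -> nat) : (forall n, (b n < b (S n))%nat) ->
  forall n, (n <= b n)%nat.
Proof.
  intros Hb n. induction n. lia. specialize (Hb n). lia.
Qed.

Lemma enum_exists (B : lang) : infinite_set B -> exists b, incr_enum B b.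
Proof.
  intros HB.
  assert (Hg : forall lo, exists k, (B k /\ (lo <= k)%nat) /\ forall j, B j /\ (lo <= j)%nat -> (k <= j)%nat).
  { intros lo. destruct (HB lo) as [k [Hk1 Hk2]].
    apply (least_ex (fun k => B k /\ (lo <= k)%nat) k). auto. }
  set (g := fun lo => proj1_sig (constructive_indefinite_description _ (Hg lo))).
  assert (Hgs : forall lo, (B (g lo) /\ (lo <= g lo)%nat) /\ forall j, B j /\ (lo <= j)%nat -> (g lo <= j)%nat).
  { intros lo. unfold g. destruct (constructive_indefinite_description _ (Hg lo)). simpl. auto. }
  set (b := nat_rect (fun _ => nat) (g 0%nat) (fun _ r => g (S r))).
  assert (b0 : b 0%nat = g 0%nat) by reflexivity.
  assert (bS : forall n, b (S n) = g (S (b n))) by reflexivity.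
  assert (Hinc : forall n, (b n < b (S n))%nat).
  { intros n. rewrite bS. destruct (Hgs (S (b n))) as [[_ H] _]. lia. }
  exists b. split; auto. intros k. split.
  - intros Hk. destruct (least_ex (fun n => (k <= b n)%nat) k (mono_ge b Hinc k)) as [m [Hm Hmin]].
    exists m. destruct m as [|m].
    + rewrite b0 in Hm |- *. destruct (Hgs 0%nat) as [_ H]. specialize (H k (conj Hk (Nat.le_0_l _))). lia.
    + assert (~ (k <= b m)%nat) by (intro HH; specialize (Hmin m HH); lia).
      rewrite bS in Hm |- *. destruct (Hgs (S (b m))) as [_ H1]. assert (S (b m) <= k)%nat by lia. specialize (H1 k (conj Hk H0)). lia.
  - intros [n <-]. destruct n. rewrite b0. apply Hgs. rewrite bS. apply Hgs.
Qed.

Lemma align (B B' : lang) b b' T :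
  incr_enum B b -> incr_enum B' b' -> (forall k, (T <= k)%nat -> (B k <-> B' k)) ->
  exists p q, forall n, b (n + p)%nat = b' (n + q)%nat.
Proof.
  intros [Hb HB] [Hb' HB'] Hag.
  destruct (least_ex (fun n => (T <= b n)%nat) T (mono_ge b Hb T)) as [p [Hp Hpm]].
  destruct (least_ex (fun n => (T <= b' n)%nat) T (mono_ge b' Hb' T)) as [q [Hq Hqm]].
  exists p, q. induction n as [|n IH]; simpl.
  - assert (B' (b p)) by (apply Hag; auto; apply HB; eauto).
    destruct (proj1 (HB' _) H) as [j Hj].
    assert (q <= j)%nat by (apply Hqm; lia).
    assert (B (b' q)) by (apply Hag; auto; apply HB'; eauto).
    destruct (proj1 (HB _) H1) as [i Hi].
    assert (p <= i)%nat by (apply Hpm; lia).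
    pose proof (mono_le b Hb _ _ H2). pose proof (mono_le b' Hb' _ _ H0). lia.
  - assert (Hlt : (b (n + p) < b (S n + p))%nat) by (apply Hb).
    assert (T <= b (S n + p))%nat by (pose proof (mono_le b Hb p (S n + p) ltac:(lia)); lia).
    assert (B' (b (S n + p))) by (apply Hag; auto; apply HB; eauto).
    destruct (proj1 (HB' _) H0) as [j Hj].
    assert (S n + q <= j)%nat.
    { assert (b' (n + q) < b' j)%nat by (simpl in *; lia).
      assert (~ (j <= n + q)%nat) by (intro HH; pose proof (mono_le b' Hb' _ _ HH); lia). lia. }
    assert (Hlt' : (b' (n + q) < b' (S n + q))%nat) by (apply Hb').
    assert (T <= b' (S n + q))%nat by (pose proof (mono_le b' Hb' q (S n + q) ltac:(lia)); lia).
    assert (B (b' (S n + q))) by (apply Hag; auto; apply HB'; eauto).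
    destruct (proj1 (HB _) H3) as [i Hi].
    assert (S n + p <= i)%nat.
    { assert (b (n + p) < b i)%nat by (simpl in *; lia).
      assert (~ (i <= n + p)%nat) by (intro HH; pose proof (mono_le b Hb _ _ HH); lia). lia. }
    pose proof (mono_le b Hb _ _ H4). pose proof (mono_le b' Hb' _ _ H1). simpl in *. lia.
Qed.
Definition cnt (A : lang) (b : nat -> nat) (m : nat) : nat :=
  length (filter (fun i => memb A (b i)) (seq 0 m)).

Lemma cnt_le A b m : (cnt A b m <= m)%nat.
Proof. unfold cnt. rewrite <- (length_seq m 0) at 2. apply filter_length_le. Qed.

Lemma cnt_shift A b m p : cnt A b (m + p) = (cnt A b p + cnt A (fun i => b (i + p)%nat) m)%nat.
Proof.
  induction m as [|m IH]. simpl. unfold cnt at 3. simpl. lia.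
  unfold cnt in *. replace (S m + p)%nat with (S (m + p)) by lia. rewrite !seq_S, !filter_app, !length_app, IH. simpl.
  destruct (memb A (b (m + p)%nat)); simpl; lia.
Qed.

Open Scope R_scope.

Lemma LimSup_plus_c u c : LimSup_seq (fun n => u n + c) = Rbar_plus (LimSup_seq u) c.
Proof.
  destruct (ex_LimSup_seq u) as [l H] eqn:E.
  rewrite (is_LimSup_seq_unique _ _ H). apply is_LimSup_seq_unique.
  destruct l as [l| |]; simpl in *.
  - intros eps. destruct (H eps) as [H1 [N H2]]. split.
    + intros N0. destruct (H1 N0) as [n [Hn1 Hn2]]. exists n. split; auto. lra.
    + exists N. intros n Hn. specialize (H2 n Hn). lra.
  - intros M N. destruct (H (M - c) N) as [n [Hn1 Hn2]]. exists n. split; auto. lra.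
  - intros M. destruct (H (M - c)) as [N HN]. exists N. intros n Hn. specialize (HN n Hn). lra.
Qed.

Lemma LimInf_plus_c u c : LimInf_seq (fun n => u n + c) = Rbar_plus (LimInf_seq u) c.
Proof.
  destruct (ex_LimInf_seq u) as [l H] eqn:E.
  rewrite (is_LimInf_seq_unique _ _ H). apply is_LimInf_seq_unique.
  destruct l as [l| |]; simpl in *.
  - intros eps. destruct (H eps) as [H1 [N H2]]. split.
    + intros N0. destruct (H1 N0) as [n [Hn1 Hn2]]. exists n. split; auto. lra.
    + exists N. intros n Hn. specialize (H2 n Hn). lra.
  - intros M. destruct (H (M - c)) as [N HN]. exists N. intros n Hn. specialize (HN n Hn). lra.
  - intros M N. destruct (H (M - c) N) as [n [Hn1 Hn2]]. exists n. split; auto. lra.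
Qed.

Lemma LimSup_shift u k : LimSup_seq (fun n => u (n + k)%nat) = LimSup_seq u.
Proof.
  destruct (ex_LimSup_seq u) as [l H].
  rewrite (is_LimSup_seq_unique _ _ H). apply is_LimSup_seq_unique.
  apply is_LimSup_seq_ind_k. auto.
Qed.

Lemma LimInf_shift u k : LimInf_seq (fun n => u (n + k)%nat) = LimInf_seq u.
Proof.
  destruct (ex_LimInf_seq u) as [l H].
  rewrite (is_LimInf_seq_unique _ _ H). apply is_LimInf_seq_unique.
  apply is_LimInf_seq_ind_k. auto.
Qed.

Lemma le_eps (r : R) L : (forall eps, 0 < eps -> Rbar_le r (Rbar_plus L eps)) -> Rbar_le r L.
Proof.
  intros H. destruct L as [l| |]; simpl in *.
  - destruct (Rle_lt_dec r l) as [h|h]; auto.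
    specialize (H ((r - l)/2) ltac:(lra)). simpl in H. lra.
  - auto.
  - specialize (H 1 ltac:(lra)). simpl in H. auto.
Qed.

Lemma transfer_sup (r : R) u v :
  (forall eps, 0 < eps -> exists N, forall n, (N <= n)%nat -> u n <= v n + eps) ->
  Rbar_le r (LimSup_seq u) -> Rbar_le r (LimSup_seq v).
Proof.
  intros H Hr. apply le_eps. intros eps Heps. rewrite <- LimSup_plus_c.
  eapply Rbar_le_trans; [exact Hr|]. apply LimSup_le. destruct (H eps Heps) as [N HN].
  exists N. auto.
Qed.

Lemma transfer_inf (r : R) u v :
  (forall eps, 0 < eps -> exists N, forall n, (N <= n)%nat -> u n <= v n + eps) ->
  Rbar_le r (LimInf_seq u) -> Rbar_le r (LimInf_seq v).
Proof.
  intros H Hr. apply le_eps. intros eps Heps. rewrite <- LimInf_plus_c.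
  eapply Rbar_le_trans; [exact Hr|]. apply LimInf_le. destruct (H eps Heps) as [N HN].
  exists N. auto.
Qed.

Lemma key_ineq cp cq s m P Q :
  0 <= cp <= P -> 0 <= cq <= Q -> 0 <= s <= m -> 1 <= m ->
  (cp + s) / (m + P) <= (cq + s) / (m + Q) + (P + Q) / m.
Proof.
  intros. set (X := (cp + s) / (m + P)). set (Y := (cq + s) / (m + Q)).
  assert (HX : X * (m + P) = cp + s) by (unfold X; field; lra).
  assert (HY : Y * (m + Q) = cq + s) by (unfold Y; field; lra).
  assert (X0 : 0 <= X) by (unfold X; apply Rdiv_le_0_compat; lra).
  assert (Y0 : 0 <= Y) by (unfold Y; apply Rdiv_le_0_compat; lra).
  assert (Y1 : Y <= 1).
  { destruct (Rle_lt_dec Y 1); auto. assert (Y * (m + Q) > 1 * (m+Q)) by (apply Rmult_gt_compat_r; lra). lra. }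
  assert (h1 : X * m <= P + s) by nra.
  assert (h2 : Y * Q <= Q) by nra.
  assert (h3 : X * m <= Y * m + (P + Q)) by nra.
  replace ((P + Q) / m) with ((P+Q) * / m) by (unfold Rdiv; ring).
  apply Rmult_le_reg_r with m. lra.
  rewrite Rmult_plus_distr_r. rewrite Rmult_assoc, Rinv_l by lra. lra.
Qed.

Lemma dens_compare A b b' p q :
  (forall n, b (n + p)%nat = b' (n + q)%nat) ->
  forall eps, 0 < eps -> exists N, forall n, (N <= n)%nat ->
    dens_ratio A b (n + p) <= dens_ratio A b' (n + q) + eps.
Proof.
  intros Hbb eps Heps.
  destruct (archimed ((INR p + INR q) / eps)) as [Har _].
  assert (Hup : (0 <= up ((INR p + INR q) / eps))%Z).
  { apply le_IZR. assert (0 <= (INR p + INR q) / eps) by (apply Rdiv_le_0_compat; [pose proof (pos_INR p); pose proof (pos_INR q)|]; lra). simpl. lra. }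
  exists (Z.to_nat (up ((INR p + INR q) / eps))). intros n Hn.
  unfold dens_ratio.
  replace (S (n + p)) with (S n + p)%nat by lia. replace (S (n + q)) with (S n + q)%nat by lia.
  fold (cnt A b (S n + p)%nat). fold (cnt A b' (S n + q)%nat).
  rewrite !cnt_shift.
  replace (fun i => b' (i + q)%nat) with (fun i => b (i + p)%nat) by (apply functional_extensionality; auto).
  rewrite !plus_INR.
  pose proof (cnt_le A b p). pose proof (cnt_le A b' q). pose proof (cnt_le A (fun i => b (i + p)%nat) (S n)).
  apply le_INR in H, H0, H1.
  assert (Hm : INR n >= INR (Z.to_nat (up ((INR p + INR q) / eps)))) by (apply Rle_ge, le_INR; auto).
  rewrite (INR_IZR_INZ (Z.to_nat _)) in Hm. rewrite Z2Nat.id in Hm by auto.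
  rewrite S_INR in *.
  pose proof (pos_INR n). pose proof (pos_INR (cnt A b p)). pose proof (pos_INR (cnt A b' q)).
  pose proof (pos_INR (cnt A (fun i => b (i + p)%nat) (S n))).
  pose proof (pos_INR p). pose proof (pos_INR q).
  pose proof (key_ineq (INR (cnt A b p)) (INR (cnt A b' q)) (INR (cnt A (fun i => b (i + p)%nat) (S n))) (INR n + 1) (INR p) (INR q)) as K.
  enough ((INR p + INR q) / (INR n + 1) <= eps) by (assert (Hk := K ltac:(lra) ltac:(lra) ltac:(lra) ltac:(lra)); lra).
  destruct (Req_dec (INR p + INR q) 0) as [Z|Z].
  - rewrite Z. unfold Rdiv. rewrite !Rmult_0_l. lra.
  - assert (0 < INR p + INR q) by (pose proof (pos_INR p); pose proof (pos_INR q); lra).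
    apply Rle_trans with ((INR p + INR q) / ((INR p + INR q) / eps)).
    + apply Rmult_le_compat_l. lra. apply Rinv_le_contravar.
      apply Rdiv_lt_0_compat; lra. lra.
    + right. field. split; lra.
Qed.

Open Scope nat_scope.

Lemma dens_transfer d A (B B' : lang) rho T :
  (forall k, T <= k -> (B k <-> B' k)) -> infinite_set B ->
  dens_ge d A B rho -> dens_ge d A B' rho.
Proof.
  intros Hag HBinf H. destruct d; simpl in *; intros b' Hb';
  destruct (enum_exists B HBinf) as [b Hb];
  destruct (align B B' b b' T Hb Hb' Hag) as [p [q Hpq]];
  specialize (H b Hb).
  - rewrite <- (LimSup_shift _ p) in H. rewrite <- (LimSup_shift _ q).
    eapply transfer_sup; [|exact H]. apply dens_compare; auto.
  - rewrite <- (LimInf_shift _ p) in H. rewrite <- (LimInf_shift _ q).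
    eapply transfer_inf; [|exact H]. apply dens_compare; auto.
Qed.

Lemma code (P : nat -> Prop) M : exists a, forall k, Nat.testbit a k = true <-> (k < M /\ P k).
Proof.
  induction M as [|M [a Ha]].
  - exists 0. intros k. rewrite Nat.bits_0. split; [discriminate|lia].
  - destruct (classic (P M)) as [HP|HP].
    + exists (Nat.setbit a M). intros k. destruct (Nat.eq_dec M k) as [<-|Hne].
      * rewrite Nat.setbit_eq. split; auto.
      * rewrite Nat.setbit_neq by auto. rewrite Ha. split; intros [? ?]; split; auto; lia.
    + exists a. intros k. rewrite Ha. split; intros [? ?]; split; auto; try lia.
      destruct (Nat.eq_dec k M); subst; [contradiction|lia].
Qed.

Lemma bound_lemma (x : nat -> nat) N : exists M', forall n, n < N -> x n < M'.
Proof.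
  induction N as [|N [M' H]].
  - exists 0. intros; lia.
  - exists (max M' (S (x N))). intros n Hn. destruct (Nat.eq_dec n N) as [->|]. lia.
    specialize (H n ltac:(lia)). lia.
Qed.

Definition Lmod (L : collection) : collection := fun n k =>
  (L (fst (Cantor.of_nat n)) k /\ Nat.testbit (fst (Cantor.of_nat (snd (Cantor.of_nat n)))) k = false)
  \/ Nat.testbit (snd (Cantor.of_nat (snd (Cantor.of_nat n)))) k = true.

Lemma Lmod_spec L i a c k :
  Lmod L (Cantor.to_nat (i, Cantor.to_nat (a, c))) k <->
  (L i k /\ Nat.testbit a k = false) \/ Nat.testbit c k = true.
Proof. unfold Lmod. rewrite !Cantor.cancel_of_to. cbn [fst snd]. rewrite !Cantor.cancel_of_to. cbn [fst snd]. tauto. Qed.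

Lemma Lmod_coll L : is_collection L -> is_collection (Lmod L).
Proof.
  intros HL n m. unfold Lmod.
  set (i := fst (Cantor.of_nat n)). set (a := fst (Cantor.of_nat (snd (Cantor.of_nat n)))).
  destruct (HL i (max m (S (Nat.log2 a)))) as [k [Hk Hik]].
  exists k. split. lia. left. split; auto. apply Nat.bits_above_log2. lia.
Qed.

Lemma main_lemma d rho (Gv : generator) :
  element_based Gv -> generates_with_density exact_enum d rho Gv ->
  element_based (fun L s => Gv (Lmod L) s) /\
  generates_with_density tolerant_enum d rho (fun L s => Gv (Lmod L) s).
Proof.
  intros HGe HG. split.
  { intros L s. apply (HGe (Lmod L) s). }
  intros L HL i x [Hinj [Khat [HKs [[M HM] [Hen [N HN]]]]]].
  destruct (code (fun k => L i k /\ ~ Khat k) M) as [a Ha].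
  destruct (bound_lemma x N) as [M' HM'].
  destruct (code (fun k => exists n, n < N /\ x n = k) M') as [c Hc].
  set (j := Cantor.to_nat (i, Cantor.to_nat (a, c))).
  assert (Hex : exact_enum (Lmod L j) x).
  { split; [auto|split].
    - intro n. unfold j. apply (proj2 (Lmod_spec L i a c (x n))). destruct (le_lt_dec N n).
      + left. split. apply HKs, HN; auto.
        destruct (Nat.testbit a (x n)) eqn:E; auto. apply Ha in E. destruct E as [_ [_ Hn]].
        exfalso; apply Hn, HN; auto.
      + right. apply Hc. split. apply HM'; auto. exists n; auto.
    - intros k Hk. unfold j in Hk. apply (proj1 (Lmod_spec L i a c k)) in Hk. destruct Hk as [[Hik Ha0]|Hc0].
      + destruct (classic (Khat k)) as [Hk|Hk]. apply Hen; auto. exfalso.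
        assert (k < M) by exact (HM k Hik Hk).
        assert (Nat.testbit a k = true) by (apply Ha; auto). congruence.
      + apply Hc in Hc0. destruct Hc0 as [_ [n [_ Hn]]]. eauto. }
  destruct (HG (Lmod L) (Lmod_coll L HL) j x Hex) as [[nstar Hns] Hd].
  split.
  - exists (max nstar N). intros n Hn. specialize (Hns n ltac:(lia)). unfold j in Hns.
    apply (proj1 (Lmod_spec L i a c _)) in Hns. unfold outputs in *.
    destruct Hns as [[H1 _]|H2]; auto. exfalso. apply Hc in H2. destruct H2 as [_ [m [Hm Hxm]]].
    destruct (HGe (Lmod L) (prefix x n)) as [Hnot _]. apply Hnot. rewrite <- Hxm.
    unfold prefix. apply in_map. apply in_seq. lia.
  - eapply (dens_transfer d _ (Lmod L j) (L i) rho (max M M')); [| apply Lmod_coll; auto | exact Hd].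
    intros k Hk. unfold j. rewrite Lmod_spec.
    destruct (Nat.testbit a k) eqn:Ea.
    { apply Ha in Ea. lia. }
    destruct (Nat.testbit c k) eqn:Ec.
    { apply Hc in Ec. lia. }
    split. intros [[? _]|?]; [auto|discriminate]. intros; left; auto.
Qed.

Open Scope R_scope.

Theorem theorem6p17 (rho_up rho_low : R) :
  0 <= rho_up <= 1 -> 0 <= rho_low <= 1 ->
  ((exists Gv : generator, element_based Gv /\
       generates_with_density exact_enum Upper rho_up Gv) ->
   exists Gt : generator, element_based Gt /\
       generates_with_density tolerant_enum Upper rho_up Gt) /\
  ((exists Gv : generator, element_based Gv /\
       generates_with_density exact_enum Lower rho_low Gv) ->
   exists Gt : generator, element_based Gt /\
       generates_with_density tolerant_enum Lower rho_low Gt).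
Proof.
  intros _ _. split; intros [Gv [HGe HG]]; exists (fun L s => Gv (Lmod L) s); apply main_lemma; auto.
Qed.
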